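(* Let $\Pi$ be an infinite atomless L\'evy measure on $(0,\infty)$ with tail $\overline{\Pi}(x)=\Pi((x,\infty))$ and inverse $\overline{\Pi}^{\leftarrow}(y)=\inf\{x>0:\overline{\Pi}(x)\le y\}$. Suppose there are functions $a:(0,\infty)\to(0,\infty)$, $b:(0,\infty)\to\mathbb{R}$ and $\gamma\le0$ such that for all $y\in\mathbb{R}$, $$\lim_{r\to\infty}\frac{\overline{\Pi}^{\leftarrow}(r-y\sqrt r)-b(r)}{a(r)}=h^{\leftarrow}(y),$$ where $h^{\leftarrow}(y)=(1-e^{-\gamma y/2})/\gamma$ if $\gamma\ne0$ and $h^{\leftarrow}(y)=y/2$ if $\gamma=0$. Let $H^{\leftarrow}(x)=\tfrac14\log^2x$ for $x>1$ and $V(x)=\overline{\Pi}^{\leftarrow}(H^{\leftarrow}(x))$, $x>1$. Then: (i) if $\gamma<0$, $V(x)\sim a(H^{\leftarrow}(x))/|\gamma|$ as $x\to\infty$, and this function is regularly varying at $\infty$ with index $-|\gamma|/2$; (ii) if $\gamma=0$, $-V$ belongs to de Haan's class $\Pi$ with slowly varying auxiliary function $\tfrac12 a(H^{\leftarrow}(\cdot))$, i.e. $\lim_{s\to\infty}\frac{-V(sx)+V(s)}{\frac12a(H^{\leftarrow}(s))}=\log x$ for all $x>0$.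
   Context: $H^{\leftarrow}$ is the inverse of $H(t)=e^{2\sqrt t}$. A measurable function $U$ is in de Haan's class $\Pi$ with auxiliary function $g>0$ if $(U(sx)-U(s))/g(s)\to\log x$ as $s\to\infty$ for all $x>0$. *)

(* Defs.v *)
From HB Require Import structures.
From mathcomp Require Import all_boot all_order all_algebra.
From mathcomp Require Import all_classical all_reals all_analysis.
Set Implicit Arguments. Unset Strict Implicit. Unset Printing Implicit Defensive.
Import Order.TTheory GRing.Theory Num.Theory numFieldNormedType.Exports.
Local Open Scope classical_set_scope.
Local Open Scope ring_scope.

Section Defs.
Variable R : realType.

Definition pos_half : set R := [set` `]0, +oo[].

Definition levy_measure_pos (P : {measure set R -> \bar R}) : Prop :=
  P [set` `]-oo, 0]] = 0%E /\
  (\int[P]_(x in pos_half) (Num.min 1 (x ^+ 2))%:E < +oo)%E.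

Definition infinite_measure_pos (P : {measure set R -> \bar R}) : Prop :=
  P pos_half = +oo%E.

Definition atomless (P : {measure set R -> \bar R}) : Prop :=
  forall x : R, P [set x] = 0%E.

(* tail  Πbar(x) = Π((x,∞)) (finite for x > 0 for a Lévy measure) *)
Definition tail (P : {measure set R -> \bar R}) (x : R) : R :=
  fine (P [set` `]x, +oo[]).

Definition tail_inv (P : {measure set R -> \bar R}) (y : R) : R :=
  inf [set x : R | 0 < x /\ tail P x <= y].

Definition hinv (gamma y : R) : R :=
  if gamma != 0 then (1 - expR (- gamma * y / 2)) / gamma else y / 2.

Definition Hinv (x : R) : R := (ln x) ^+ 2 / 4.

Definition Vfun (P : {measure set R -> \bar R}) (x : R) : R :=
  tail_inv P (Hinv x).

Definition regularly_varying (f : R -> R) (rho : R) : Prop :=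
  (\forall s \near +oo%R, 0 < f s) /\
  forall x : R, 0 < x ->
    (fun s => f (s * x) / f s) @ +oo%R --> x `^ rho.

Definition slowly_varying (f : R -> R) : Prop := regularly_varying f 0.

End Defs.

(* Main.v *)
Require Import Defs.
From HB Require Import structures.
From mathcomp Require Import all_boot all_order all_algebra.
From mathcomp Require Import all_classical all_reals all_analysis.
From mathcomp Require Import ring lra.
Import Order.TTheory GRing.Theory Num.Theory numFieldNormedType.Exports.
Local Open Scope classical_set_scope.
Local Open Scope ring_scope.
Set Implicit Arguments. Unset Strict Implicit.

Lemma absP (R : realType) (x y : R) : `|x| <= y <-> -y <= x /\ x <= y.
Proof. by rewrite ler_norml; split => [/andP[]|[-> ->]]. Qed.

Lemma max_lt (R : realType) (x y z : R) : Num.max x y < z -> x < z /\ y < z.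
Proof. by rewrite gt_max => /andP[]. Qed.

Lemma sqrt_facts (R : realType) (r : R) : 0 <= r ->
  0 <= Num.sqrt r /\ Num.sqrt r * Num.sqrt r = r.
Proof. move=> r0; split; first exact: sqrtr_ge0. by rewrite -expr2 sqr_sqrtr. Qed.
Lemma hinv_cont (R : realType) (g : R) : continuous (hinv g).
Proof.
move=> y; rewrite /hinv; case: (g != 0).
- apply: cvgM; last exact: cvg_cst.
  apply: cvgB; first exact: cvg_cst.
  apply: continuous_comp; last exact: continuous_expR.
  apply: cvgM; last exact: cvg_cst.
  apply: cvgM; first exact: cvg_cst.
  exact: cvg_id.
- apply: cvgM; last exact: cvg_cst. exact: cvg_id.
Qed.

Lemma cont_delta (R : realType) (f : R -> R) y e : continuous f -> 0 < e ->
  exists dl, 0 < dl /\ `|f (y - dl) - f y| <= e /\ `|f (y + dl) - f y| <= e.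
Proof.
move=> cf e0; have := cf y; move/cvgrPdist_le => /(_ e e0).
move/nbhs_ballP => [dl /= dl0 Hb].
exists (dl/2); split; first by lra.
split; rewrite distrC; apply: Hb; rewrite /ball /=.
- rewrite opprB addrC subrK ger0_norm; lra.
- rewrite opprD addrA subrr add0r normrN ger0_norm; lra.
Qed.
Lemma cvgP (R : realType) (f : R -> R) (l : R) :
  f @ +oo%R --> l <-> forall e, 0 < e -> exists M, forall x, M < x -> `|f x - l| <= e.
Proof.
split.
- move/cvgrPdist_le => H e e0; have [M [_ HM]] := H e e0.
  by exists M => x Mx; rewrite distrC; apply: HM.
- move=> H; apply/cvgrPdist_le => e e0; have [M HM] := H e e0.
  exists M; split; first exact: num_real.
  by move=> x Mx; rewrite distrC; apply: HM.
Qed.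
Lemma KL (R : realType) (phi a b : R -> R) (g T y d : R) :
  (forall u v, T <= u -> u <= v -> phi v <= phi u) ->
  (forall r, 0 < r -> 0 < a r) ->
  (forall y, (fun r => (phi (r - y * Num.sqrt r) - b r) / a r) @ +oo%R --> hinv g y) ->
  (fun r => (phi (r - y * Num.sqrt r + d) - b r) / a r) @ +oo%R --> hinv g y.
Proof.
move=> mono apos H; apply/cvgP => e e0.
have e20 : 0 < e / 2 by lra.
have [dl [dl0 [H1 H2]]] := @cont_delta _ _ y _ (@hinv_cont _ g) e20.
have /cvgP/(_ _ e20) [M1 HM1] := H (y + dl).
have /cvgP/(_ _ e20) [M2 HM2] := H (y - dl).
have [q [hd0 hd]] : exists q, 0 <= q /\ dl * q = `|d|.
  exists (`|d| / dl); split; first by rewrite divr_ge0 // ltW.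
  by rewrite mulrC divfK // gt_eqF.
pose s0 := q + `|y| + dl + `|T| + 1.
exists (Num.max 1 (Num.max (s0^+2) (Num.max M1 M2))) => r.
move=> /max_lt [r1 /max_lt [rs0 /max_lt [rM1 rM2]]].
have [sr0 srr] := sqrt_facts (ltW (lt_trans ltr01 r1)).
set sr := Num.sqrt r in sr0 srr *.
have ar := apos r (lt_trans ltr01 r1).
have nd := normr_ge0 d; have ny := normr_ge0 y; have nT := normr_ge0 T.
have dd : -`|d| <= d <= `|d| by rewrite -ler_norml.
have yy : -`|y| <= y <= `|y| by rewrite -ler_norml.
have TT : -`|T| <= T <= `|T| by rewrite -ler_norml.
case/andP: dd => dd1 dd2; case/andP: yy => yy1 yy2; case/andP: TT => TT1 TT2.
have s0pos : 1 <= s0.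
  rewrite /s0; lra.
have ss : s0 < sr.
  rewrite ltNge; apply/negP => hle; move: rs0; rewrite expr2; nra.
have s0e : s0 = q + `|y| + dl + `|T| + 1 by [].
have sq0 : 0 < sr - q by lra.
have k1 : dl * sr >= `|d|.
  have := mulr_gt0 dl0 sq0; nra.
have sy0 : `|T| + 1 <= sr - y - dl by lra.
have klo : T <= r - (y + dl) * sr.
  have h1 : sr * (`|T| + 1) <= sr * (sr - y - dl) by apply: ler_wpM2l.
  have h2 : 0 <= (sr - 1) * (`|T| + 1) by apply: mulr_ge0; lra.
  nra.
have kA1 : r - (y + dl) * sr <= r - y * sr + d by nra.
have kA2 : r - y * sr + d <= r - (y - dl) * sr by nra.
have p1 := mono _ _ klo kA1.
have p2 := mono _ _ (le_trans klo kA1) kA2.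
have ai : 0 <= (a r)^-1 by rewrite invr_ge0 ltW.
have q1 : (phi (r - y * sr + d) - b r) / a r <= (phi (r - (y + dl) * sr) - b r) / a r.
  by apply: ler_wpM2r => //; lra.
have q2 : (phi (r - (y - dl) * sr) - b r) / a r <= (phi (r - y * sr + d) - b r) / a r.
  by apply: ler_wpM2r => //; lra.
have := HM1 r rM1; rewrite -/sr.
move: H1 H2 => /absP H1 /absP H2.
move=> /absP Z1; have := HM2 r rM2; rewrite -/sr => /absP Z2.
apply/absP; lra.
Qed.

Lemma EV (R : realType) (f g : R -> R) (l : R) :
  (exists M, forall x, M < x -> f x = g x) -> g @ +oo%R --> l -> f @ +oo%R --> l.
Proof.
move=> [M HM] /cvgP H; apply/cvgP => e e0; have [N HN] := H e e0.
exists (Num.max M N) => x /max_lt [xM xN]; rewrite HM //; exact: HN.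
Qed.

Lemma CL (R : realType) (f g : R -> R) (l : R) :
  f @ +oo%R --> l -> (forall M, exists N, forall s, N < s -> M < g s) ->
  (fun s => f (g s)) @ +oo%R --> l.
Proof.
move=> /cvgP H Hg; apply/cvgP => e e0; have [M HM] := H e e0.
have [N HN] := Hg M; exists N => s sN; exact/HM/HN.
Qed.

Definition rho (R : realType) (u r : R) := r + u * Num.sqrt r + u ^+ 2 / 4.

Lemma sqrt_big (R : realType) (r c : R) : 0 <= c -> c ^+ 2 < r -> c < Num.sqrt r.
Proof.
move=> c0 cr; have r0 : 0 <= r by apply: ltW; apply: le_lt_trans cr; apply: sqr_ge0.
have [s0 ss] := sqrt_facts r0; rewrite ltNge; apply/negP => h; move: cr; rewrite expr2; nra.
Qed.

Lemma sqrt_rho (R : realType) (u r : R) : 0 <= r -> 0 <= Num.sqrt r + u / 2 ->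
  Num.sqrt (rho u r) = Num.sqrt r + u / 2.
Proof.
move=> r0 h; have [s0 ss] := sqrt_facts r0.
have -> : rho u r = (Num.sqrt r + u / 2) ^+ 2 by rewrite /rho expr2 -{1}ss; field.
by rewrite sqrtr_sqr ger0_norm.
Qed.

Lemma rho_infty (R : realType) (u : R) M : exists N, forall r, N < r -> M < rho u r.
Proof.
pose c := `|u| + `|M| + 1.
have c0 : 0 <= c by rewrite /c; have := normr_ge0 u; have := normr_ge0 M; lra.
exists (c ^+ 2) => r rc.
have r0 : 0 <= r by apply: ltW; apply: le_lt_trans rc; apply: sqr_ge0.
have sc := sqrt_big c0 rc; have [s0 ss] := sqrt_facts r0.
have := normr_ge0 u; have := normr_ge0 M.
have : -`|u| <= u <= `|u| by rewrite -ler_norml.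
have : -`|M| <= M <= `|M| by rewrite -ler_norml.
move=> /andP[m1 m2] /andP[u1 u2] nM nu.
have e : rho u r = (Num.sqrt r + u / 2) * (Num.sqrt r + u / 2) by rewrite /rho -{1}ss; field.
rewrite e; set z := Num.sqrt r + u / 2.
have z1 : `|M| + 1 <= z by rewrite /z /c in sc *; lra.
nra.
Qed.

Definition Hinv' (R : realType) (x : R) := Hinv x.

Lemma Hinv_infty (R : realType) (M : R) : exists N, forall s, N < s -> M < Hinv s.
Proof.
pose c := 2 * (`|M| + 1).
have nM := normr_ge0 M.
have : -`|M| <= M <= `|M| by rewrite -ler_norml.
move=> /andP[m1 m2].
exists (expR c) => s sc.
have s0 : 0 < s by apply: lt_trans sc; apply: expR_gt0.
have : c < ln s.
  by rewrite -ltr_ln ?posrE ?expR_gt0 // expRK in sc.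
rewrite /Hinv /c => h; nra.
Qed.

Lemma Hinv_sqrt (R : realType) (s : R) : 1 <= s -> Num.sqrt (Hinv s) = ln s / 2.
Proof.
move=> s1; have : 0 <= ln s by rewrite -ln1 ler_ln ?posrE //; lra.
move=> l0; have -> : Hinv s = (ln s / 2) ^+ 2 by rewrite /Hinv; field.
by rewrite sqrtr_sqr ger0_norm //; lra.
Qed.

Lemma HinvM (R : realType) (s x : R) : 1 <= s -> 0 < x -> Hinv (s * x) = rho (ln x) (Hinv s).
Proof.
move=> s1 x0; have s0 : 0 < s by lra.
rewrite /rho Hinv_sqrt // /Hinv lnM ?posrE //; by field.
Qed.

Lemma EQ (R : realType) (f g : R -> R) (l : R) :
  (forall x, f x = g x) -> g @ +oo%R --> l -> f @ +oo%R --> l.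
Proof. by move=> h; apply: EV; exists 0 => x _; apply: h. Qed.

Lemma expR_ne1 (R : realType) (g : R) : g != 0 -> 1 - expR (- g) != 0.
Proof.
move=> g0; rewrite subr_eq0; apply/negP => /eqP h.
have : expR (- g) = expR 0 by rewrite expR0 h.
by move/expR_inj/eqP; rewrite oppr_eq0 (negbTE g0).
Qed.

Lemma hinv_L (R : realType) (g : R) : hinv g 2 - hinv g 0 != 0.
Proof.
rewrite /hinv; case: ifP => g0.
- rewrite !mulr0 !mul0r expR0 subrr mul0r subr0.
  have -> : - g * 2 / 2 = - g by field.
  by rewrite mulf_neq0 ?invr_eq0 // expR_ne1.
- rewrite mul0r subr0; apply/eqP; lra.
Qed.

Lemma hinv_ratio (R : realType) (g u : R) :
  (hinv g (2 - u) - hinv g (0 - u)) / (hinv g 2 - hinv g 0) = expR (g * u / 2).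
Proof.
rewrite /hinv; case: ifP => g0.
- have e1 : expR (- g * (2 - u) / 2) = expR (- g) * expR (g * u / 2).
    by rewrite -expRD; congr expR; field.
  have e2 : expR (- g * (0 - u) / 2) = expR (g * u / 2) by congr expR; field.
  have e3 : expR (- g * 0 / 2) = 1 by rewrite mulr0 mul0r expR0.
  have e4 : expR (- g * 2 / 2) = expR (- g) by congr expR; field.
  rewrite e1 e2 e3 e4; have := expR_ne1 g0; move=> h; field.
  by rewrite h g0.
- move/negbFE: g0 => /eqP ->; rewrite !mul0r expR0; by field.
Qed.

Lemma TY (R : realType) (phi a b : R -> R) (g T u : R) :
  (forall u v, T <= u -> u <= v -> phi v <= phi u) ->
  (forall r, 0 < r -> 0 < a r) ->
  (forall y, (fun r => (phi (r - y * Num.sqrt r) - b r) / a r) @ +oo%R --> hinv g y) ->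
  (fun r => a (rho u r) / a r) @ +oo%R --> expR (g * u / 2).
Proof.
move=> mono apos H.
have A y : (fun r => (phi (rho u r - y * Num.sqrt (rho u r)) - b r) / a r) @ +oo%R
    --> hinv g (y - u).
  apply: EV (KL (y:=y - u) (u ^+ 2 / 4 - y * u / 2) mono apos H).
  exists (`|u| ^+ 2) => r ru.
  have su := sqrt_big (normr_ge0 u) ru.
  have r0 : 0 <= r by apply: ltW; apply: le_lt_trans ru; apply: sqr_ge0.
  have : -`|u| <= u <= `|u| by rewrite -ler_norml.
  move=> /andP[u1 u2].
  rewrite sqrt_rho //; last lra.
  congr ((phi _ - _) / _); rewrite /rho; ring.
have B y : (fun r => (phi (rho u r - y * Num.sqrt (rho u r)) - b (rho u r)) / a (rho u r))
    @ +oo%R --> hinv g y.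
  exact: (CL (H y) (@rho_infty _ u)).
pose DA := fun r => (phi (rho u r - 2 * Num.sqrt (rho u r)) - b r) / a r
   - (phi (rho u r - 0 * Num.sqrt (rho u r)) - b r) / a r.
pose DB := fun r => (phi (rho u r - 2 * Num.sqrt (rho u r)) - b (rho u r)) / a (rho u r)
   - (phi (rho u r - 0 * Num.sqrt (rho u r)) - b (rho u r)) / a (rho u r).
have cA : DA @ +oo%R --> hinv g (2 - u) - hinv g (0 - u) by apply: cvgB; apply: A.
have cB : DB @ +oo%R --> hinv g 2 - hinv g 0 by apply: cvgB; apply: B.
have L0 := hinv_L g.
rewrite -hinv_ratio; apply: (@EV _ _ (fun r => DA r * (DB r)^-1)); last first.
  by apply: cvgM => //; apply: cvgV.
have L0' : 0 < `|hinv g 2 - hinv g 0| / 2 by rewrite divr_gt0 // normr_gt0.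
have [M1 HM1] := (iffLR (cvgP _ _)) cB _ L0'.
have [M2 HM2] := @rho_infty _ u 0.
exists (Num.max 0 (Num.max M1 M2)) => r /max_lt [r0 /max_lt [rM1 rM2]].
have ar := apos r r0; have aR := apos _ (HM2 r rM2).
have DBr : DB r != 0.
  apply/negP => /eqP h; have := HM1 r rM1; rewrite h sub0r normrN.
  have := normr_gt0 (hinv g 2 - hinv g 0); rewrite L0 => /= ?; lra.
rewrite /=.
move: DBr; rewrite /DB /DA.
set X := phi (rho u r - 2 * _); set Y := phi (rho u r - 0 * _).
move=> DBr.
have N0 : X - Y != 0.
  apply/negP => /eqP h; move: DBr; have -> : X = Y by apply/eqP; rewrite -subr_eq0 h.
  by rewrite subrr eqxx.
field.
have -> : X - b (rho u r) - (Y - b (rho u r)) = X - Y by ring.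
by rewrite N0 !gt_eqF.
Qed.

Lemma nat_big (R : realType) (x : R) : exists n : nat, x < n%:R.
Proof. by exists (Num.truncn x).+1; apply: truncnS_gt. Qed.

Lemma geo_small (R : realType) (c d : R) : 0 <= c -> c < 1 -> 0 < d ->
  exists n : nat, c ^+ n <= d.
Proof.
move=> c0 c1 d0.
have : `|c| < 1 by rewrite ger0_norm.
move/cvg_expr/cvgrPdist_le => /(_ d d0) [N _ HN].
exists N; have := HN N (leqnn N); rewrite /= sub0r normrN ger0_norm //.
exact: exprn_ge0.
Qed.

Lemma consts (R : realType) (G q eta D0 : R) : 0 < G -> 0 < q -> q < 1 -> 0 < eta -> eta <= 1 ->
  D0 * G = 1 - q ->
  exists e K K', [/\ 0 < e, q + e < 1, 0 <= K, 0 <= K' &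
    [/\ D0 + e + K * (q + e) = K, D0 - e + K' * (q - e) = K',
        G * K <= 1 + eta & 1 - eta <= G * K']].
Proof.
move=> G0 q0 q1 e0 e1 hD.
pose t := eta / (G + 1 + eta).
have t0 : 0 < t by rewrite /t divr_gt0 //; lra.
have ht : t * (G + 1 + eta) = eta by rewrite /t divfK //; apply/eqP; lra.
have t1 : t < 1 by nra.
have tG : t * G < 1 by nra.
have hD' : D0 = (1 - q) / G by rewrite -hD; field; apply/eqP; lra.
exists (t * (1 - q)), ((G^-1 + t) / (1 - t)), ((G^-1 - t) / (1 + t)).
have Gi : G^-1 * G = 1 by rewrite mulVf //; apply/eqP; lra.
have Gi0 : 0 < G^-1 by rewrite invr_gt0.
have tGi : t < G^-1.
  by rewrite -(ltr_pM2r G0) Gi.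
split.
- by apply: mulr_gt0 => //; lra.
- nra.
- by apply: divr_ge0; lra.
- by apply: divr_ge0; lra.
split.
- rewrite hD'; field; apply/andP; split; apply/eqP; lra.
- rewrite hD'; field; apply/andP; split; apply/eqP; lra.
- rewrite mulrA ler_pdivrMr; last lra.
  rewrite mulrDr (mulrC G) Gi; nra.
- rewrite mulrA ler_pdivlMr; last lra.
  rewrite mulrBr (mulrC G) Gi; nra.
Qed.

Lemma rho2_ge (R : realType) (x : R) : x + 1 <= rho 2 x.
Proof.
rewrite /rho; have := sqrtr_ge0 x; rewrite expr2.
have -> : (2 * 2 / 4 : R) = 1 by field.
lra.
Qed.

Lemma iter_ge (R : realType) (n : nat) (x : R) : x + n%:R <= iter n (rho 2) x.
Proof.
elim: n => [|n IH] /=; first by rewrite addr0.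
apply: le_trans (rho2_ge _); rewrite -natr1; lra.
Qed.

Lemma GEO (R : realType) (phi a b : R -> R) (g T : R) :
  (forall y, 0 <= phi y) ->
  (forall u v, T <= u -> u <= v -> phi v <= phi u) ->
  (forall e, 0 < e -> exists Y, forall y, Y <= y -> phi y <= e) ->
  (forall r, 0 < r -> 0 < a r) -> g < 0 ->
  (forall y, (fun r => (phi (r - y * Num.sqrt r) - b r) / a r) @ +oo%R --> hinv g y) ->
  (fun r => phi r / (a r / `|g|)) @ +oo%R --> (1 : R).
Proof.
move=> p0 mono p_to0 apos g0 H.
pose G := - g.
have G0 : 0 < G by rewrite /G; lra.
have nG : `|g| = G by rewrite ltr0_norm.
pose q := expR g.
have q0 : 0 < q by apply: expR_gt0.
have q1 : q < 1 by rewrite /q expR_lt1.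
pose D0 := (1 - q) / G.
have hD : D0 * G = 1 - q by rewrite /D0 divfK // gt_eqF.
have gn0 : (g != 0) = true by rewrite lt_eqF.
have cD : (fun r => (phi r - phi (rho 2 r)) / a r) @ +oo%R --> D0.
  have c1 := H 0.
  have c2 := KL (y := -2) 1 mono apos H.
  have -> : D0 = hinv g 0 - hinv g (-2).
    rewrite /hinv gn0 /D0 /q /G.
    have -> : - g * 0 / 2 = 0 by field.
    have -> : - g * -2 / 2 = g by field.
    rewrite expR0; field; apply/eqP; lra.
  apply: EQ (cvgB c1 c2) => r /=.
  change ((phi r - phi (rho 2 r)) / a r = (phi (r - 0 * Num.sqrt r) - b r) / a r - (phi (r - -2 * Num.sqrt r + 1) - b r) / a r).
  have -> : r - 0 * Num.sqrt r = r by ring.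
  have -> : r - -2 * Num.sqrt r + 1 = rho 2 r by rewrite /rho; field.
  rewrite -mulrBl; congr (_ * _); ring.
have cQ : (fun r => a (rho 2 r) / a r) @ +oo%R --> q.
  have := TY (u := 2) mono apos H.
  by have -> : g * 2 / 2 = g by field.
apply/cvgP => eta eta0.
pose eta1 := Num.min eta 1.
have e10 : 0 < eta1 by rewrite /eta1 lt_min eta0 ltr01.
have e11 : eta1 <= 1 by rewrite /eta1 ge_min lexx orbT.
have e1e : eta1 <= eta by rewrite /eta1 ge_min lexx.
have [e [K [K' [e0 qe1 K0 K'0 [hK hK' GK GK']]]]] := consts G0 q0 q1 e10 e11 hD.
have /cvgP/(_ _ e0) [R1 HR1] := cD.
have /cvgP/(_ _ e0) [R2 HR2] := cQ.
pose R0 := Num.max 1 (Num.max R1 R2).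
have step x : R0 < x -> 0 < a x /\ R0 < rho 2 x /\
    (D0 - e) * a x <= phi x - phi (rho 2 x) /\ phi x - phi (rho 2 x) <= (D0 + e) * a x /\
    (q - e) * a x <= a (rho 2 x) /\ a (rho 2 x) <= (q + e) * a x.
  move=> hx; have [x1 /max_lt [xR1 xR2]] := max_lt hx.
  have ax : 0 < a x by apply: apos; lra.
  have hr := rho2_ge x.
  have := HR1 x xR1; have := HR2 x xR2.
  set z1 := a (rho 2 x) / a x; set z2 := (phi x - phi (rho 2 x)) / a x.
  have e1 : a (rho 2 x) = z1 * a x by rewrite /z1 divfK // gt_eqF.
  have e2 : phi x - phi (rho 2 x) = z2 * a x by rewrite /z2 divfK // gt_eqF.
  move=> /absP [h1 h2] /absP [h3 h4].
  split => //; split; first lra; rewrite ?e1 ?e2; split; [nra|split; [nra|split; nra]].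
have U n : forall x, R0 < x -> phi x <= K * a x + phi (iter n (rho 2) x).
  elim: n => [|n IH] x hx.
    rewrite /=.
    have [ax _] := step x hx; nra.
  rewrite iterSr.
  have [ax [hr [d1 [d2 [q1' q2']]]]] := step x hx.
  have := IH _ hr.
  have k1 : K * a (rho 2 x) <= K * ((q + e) * a x) by apply: ler_wpM2l.
  have k2 : (D0 + e + K * (q + e)) * a x = K * a x by rewrite hK.
  nra.
have Aup n : forall x, R0 < x -> a (iter n (rho 2) x) <= (q + e) ^+ n * a x.
  elim: n => [|n IH] x hx; first by rewrite /= expr0 mul1r.
  rewrite iterSr.
  have [ax [hr [d1 [d2 [q1' q2']]]]] := step x hx.
  have := IH _ hr.
  have w0 : 0 <= (q + e) ^+ n by apply: exprn_ge0; lra.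
  have k1 : (q + e) ^+ n * a (rho 2 x) <= (q + e) ^+ n * ((q + e) * a x)
    by apply: ler_wpM2l.
  rewrite exprSr; nra.
have L n : forall x, R0 < x -> K' * a x - K' * a (iter n (rho 2) x) <= phi x.
  elim: n => [|n IH] x hx; first by rewrite /= subrr.
  rewrite iterSr.
  have [ax [hr [d1 [d2 [q1' q2']]]]] := step x hx.
  have := IH _ hr.
  have k1 : K' * ((q - e) * a x) <= K' * a (rho 2 x) by apply: ler_wpM2l.
  have k2 : (D0 - e + K' * (q - e)) * a x = K' * a x by rewrite hK'.
  nra.
exists R0 => r hr.
have [ar _] := step r hr.
have r0 : 0 <= r by move: hr; rewrite /R0 => /max_lt [? _]; lra.
have up : phi r <= K * a r.
  apply/ler_addgt0Pr => dl dl0.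
  have [Y HY] := p_to0 dl dl0.
  have [n hn] := nat_big (Y - r).
  have := HY (iter n (rho 2) r) _.
  have := iter_ge n r; have := U n r hr.
  move=> h1 h2 h3; have := h3 ltac:(lra); lra.
have lo : K' * a r <= phi r.
  apply/ler_addgt0Pr => dl dl0.
  have c0 : 0 <= q + e by lra.
  have d0 : 0 < dl / (K' * a r + 1).
    by apply: divr_gt0 => //; have := mulr_ge0 K'0 (ltW ar); lra.
  have [n hn] := geo_small c0 qe1 d0.
  move: hn; rewrite ler_pdivlMr; last by have := mulr_ge0 K'0 (ltW ar); lra.
  have w0 : 0 <= (q + e) ^+ n by apply: exprn_ge0.
  have := Aup n r hr; have := L n r hr.
  move=> h1 h2 h3.
  have k1 : K' * a (iter n (rho 2) r) <= K' * ((q + e) ^+ n * a r) by apply: ler_wpM2l.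
  have k2 : 0 <= K' * a r by apply: mulr_ge0 => //; apply: ltW.
  nra.
rewrite nG.
have -> : phi r / (a r / G) = G * (phi r / a r) by field; rewrite !gt_eqF.
set z := phi r / a r.
have ez : phi r = z * a r by rewrite /z divfK // gt_eqF.
have z1 : z <= K by rewrite ez in up; nra.
have z2 : K' <= z by rewrite ez in lo; nra.
apply/absP; nra.
Qed.

Lemma Hinv_pos (R : realType) (s : R) : 1 < s -> 0 < Hinv s.
Proof.
move=> s1; have := ln_gt0 s1; rewrite /Hinv => h.
by apply: divr_gt0 => //; apply: exprn_gt0.
Qed.

Lemma RV (R : realType) (phi a b : R -> R) (g T c : R) :
  (forall u v, T <= u -> u <= v -> phi v <= phi u) ->
  (forall r, 0 < r -> 0 < a r) ->
  (forall y, (fun r => (phi (r - y * Num.sqrt r) - b r) / a r) @ +oo%R --> hinv g y) ->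
  0 < c -> regularly_varying (fun x => a (Hinv x) / c) (g / 2).
Proof.
move=> mono apos H c0; split.
- exists 1; split; first exact: num_real.
  move=> s s1; apply: divr_gt0 => //; apply: apos; exact: Hinv_pos.
- move=> x x0.
  have -> : x `^ (g / 2) = expR (g * ln x / 2).
    by rewrite /powR (gt_eqF x0) /=; congr expR; ring.
  apply: EV (CL (TY (u := ln x) mono apos H) (@Hinv_infty R)).
  exists 1 => s s1.
  have hp := apos _ (Hinv_pos s1).
  rewrite HinvM //; last lra.
  field; rewrite !gt_eqF //.
Qed.

Lemma tinv_ge0 (R : realType) (P : {measure set R -> \bar R}) y : 0 <= tail_inv P y.
Proof.
rewrite /tail_inv; set S := [set x | _].
case: (pselect (exists x, S x)) => [[x Sx]|hn].
- apply: lb_le_inf; first by exists x.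
  by move=> z [z0 _]; apply: ltW.
- have -> : S = set0 by apply/seteqP; split => z //= Sz; apply: hn; exists z.
  by rewrite inf0.
Qed.

Lemma tinv_mono (R : realType) (P : {measure set R -> \bar R}) u v :
  tail P 1 <= u -> u <= v -> tail_inv P v <= tail_inv P u.
Proof.
move=> h1 uv; rewrite /tail_inv.
apply: lb_le_inf; first by exists 1; split => //; apply: ltr01.
move=> z [z0 hz]; apply: ge_inf.
- by exists 0 => w [w0 _]; apply: ltW.
- by split => //; apply: le_trans uv.
Qed.

Lemma tinv_to0 (R : realType) (P : {measure set R -> \bar R}) e : 0 < e ->
  exists Y, forall y, Y <= y -> tail_inv P y <= e.
Proof.
move=> e0; exists (tail P e) => y hy; rewrite /tail_inv; apply: ge_inf.
- by exists 0 => w [w0 _]; apply: ltW.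
- by split.
Qed.

Unset Implicit Arguments.
Set Strict Implicit.

Theorem proposition3p1 (R : realType) (P : {measure set R -> \bar R})
    (a b : R -> R) (gamma : R) :
  levy_measure_pos P -> infinite_measure_pos P -> atomless P ->
  (forall r, 0 < r -> 0 < a r) ->
  gamma <= 0 ->
  (forall y : R,
     (fun r => (tail_inv P (r - y * Num.sqrt r) - b r) / a r) @ +oo%R
       --> hinv gamma y) ->
  (gamma < 0 ->
     ((fun x => Vfun P x / (a (Hinv x) / `|gamma|)) @ +oo%R --> (1:R)) /\
     regularly_varying (fun x => a (Hinv x) / `|gamma|) (- `|gamma| / 2)) /\
  (gamma = 0 ->
     slowly_varying (fun x => a (Hinv x) / 2) /\
     forall x : R, 0 < x ->
       ((fun s => (- Vfun P (s * x) + Vfun P s) / (a (Hinv s) / 2)) @ +oo%R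
         --> ln x)).
Proof.
move=> _ _ _ apos gle H.
have p0 := @tinv_ge0 R P.
have mono := @tinv_mono R P.
have to0 := @tinv_to0 R P.
split.
- move=> gl0; split.
  + exact: (CL (GEO p0 mono to0 apos gl0 H) (@Hinv_infty R)).
  + have -> : - `|gamma| / 2 = gamma / 2 by rewrite ltr0_norm // opprK.
    apply: RV mono apos H _; by rewrite normr_gt0 lt_eqF.
- move=> g0; subst gamma; split.
  + rewrite /slowly_varying.
    have -> : (0 : R) = 0 / 2 by rewrite mul0r.
    apply: RV mono apos H _; lra.
  + move=> x x0.
    pose u := ln x.
    have c1 := KL (y := - u) (u ^+ 2 / 4) mono apos H.
    have c2 := H 0.
    have Hr : (fun r => (- tail_inv P (rho u r) + tail_inv P r) / (a r / 2)) @ +oo%R --> ln x.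
      have -> : ln x = 2 * (hinv 0 0 - hinv 0 (- u)).
        by rewrite /hinv eqxx /= /u; field.
      apply: (@EV _ _ (fun r => 2 * ((tail_inv P (r - 0 * Num.sqrt r) - b r) / a r
           - (tail_inv P (r - - u * Num.sqrt r + u ^+ 2 / 4) - b r) / a r))).
        exists 0 => r r0.
        have ar := apos r r0.
        have -> : r - 0 * Num.sqrt r = r by ring.
        have -> : r - - u * Num.sqrt r + u ^+ 2 / 4 = rho u r by rewrite /rho; ring.
        field; rewrite gt_eqF //.
      apply: cvgM; first exact: cvg_cst.
      by apply: cvgB.
    apply: EV (CL Hr (@Hinv_infty R)).
    exists 1 => s s1.
    by rewrite /Vfun HinvM //; lra.
Qed.
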